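(* Let a thermodynamic Stephani universe be given and consider any thermodynamic scheme with specific entropy $s=s(w)$ ($s'\neq0$), matter density $n=(1+bw)^3/(R^3N(w))$ ($N>0$) and temperature $$\Theta=\frac{(\rho+p)R^3[N'(w)(1+bw)-3N(w)b]}{s'(w)(1+bw)^4}.$$ If the fluid acceleration $\mathbf a$ satisfies $\mathbf a=-\perp d\ln\Theta$ (equivalently $\partial_w(\alpha\Theta)=0$), then $b$ is constant, i.e. the metric is a FLRW universe. Hence a thermodynamic Stephani universe can describe a fluid with non-vanishing thermal conductivity coefficient only in the FLRW case.
   Context: Thermodynamic Stephani universe: $ds^2=-\alpha^2dt^2+\Omega^2(dx^2+dy^2+dz^2)$ with $L=R(t)/(1+b(t)w)$, $\Omega=\frac{w}{2z}L$, $\alpha=R\,\partial_R\ln L=\frac{1+(b-Rb')w}{1+bw}$, $w=2z/(1+\frac\varepsilon4 r^2)$, $r^2=x^2+y^2+z^2$, $\varepsilon\in\{0,\pm1\}$; functions of $t$ are regarded as functions of $R$ (prime $=d/dR$). Fluid velocity $u=\alpha^{-1}\partial_t$, $\rho=\frac{3}{R^2}(\dot R^2+\varepsilon-4b^2)$, $p=-\rho-\frac R3\frac{\rho'(R)}{\alpha}$. $\mathbf a=\nabla_uu$ is the acceleration, $\perp$ is the orthogonal projection onto the space orthogonal to $u$. *)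

(* Defs.v *)
From Stdlib Require Import Reals.
From Coquelicot Require Import Coquelicot.
Open Scope R_scope.

(* All functions of t are regarded as functions of the scale factor R
   (written RR below); prime = d/dR = Derive.  Rd RR is \dot R as a function of R. *)

Definition alpha (b : R -> R) (RR w : R) : R :=
  (1 + (b RR - RR * Derive b RR) * w) / (1 + b RR * w).

Definition rho (eps : R) (Rd b : R -> R) (RR : R) : R :=
  3 / RR ^ 2 * (Rd RR ^ 2 + eps - 4 * b RR ^ 2).

Definition pressure (eps : R) (Rd b : R -> R) (RR w : R) : R :=
  - rho eps Rd b RR - RR / 3 * Derive (rho eps Rd b) RR / alpha b RR w.

Definition density (b N : R -> R) (RR w : R) : R :=
  (1 + b RR * w) ^ 3 / (RR ^ 3 * N w).

Definition Theta (eps : R) (Rd b N s : R -> R) (RR w : R) : R :=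
  (rho eps Rd b RR + pressure eps Rd b RR w) * RR ^ 3
  * (Derive N w * (1 + b RR * w) - 3 * N w * b RR)
  / (Derive s w * (1 + b RR * w) ^ 4).

(* Main.v *)
Require Import Defs.
From Stdlib Require Import Reals Lra.
From Coquelicot Require Import Coquelicot.
Open Scope R_scope.


Ltac nzt := first [ repeat apply Rmult_integral_contrapositive_currified; auto; lra | field; repeat split; auto ].

Lemma loc_int (a c x : R) : a < x < c -> locally x (fun t => a < t < c).
Proof.
  intros H.
  assert (He : 0 < Rmin (x - a) (c - x)) by (apply Rmin_glb_lt; lra).
  exists (mkposreal _ He). intros t Ht.
  change (Rabs (t - x) < Rmin (x - a) (c - x)) in Ht.
  apply Rabs_def2 in Ht.
  pose proof (Rmin_l (x - a) (c - x)). pose proof (Rmin_r (x - a) (c - x)). lra.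
Qed.

Lemma const_on (f : R -> R) (a c : R) :
  (forall x, a < x < c -> is_derive f x 0) ->
  forall x y, a < x < c -> a < y < c -> f x = f y.
Proof.
  intros Hd x y Hx Hy.
  destruct (Rtotal_order x y) as [Hl|[He|Hg]].
  - apply (eq_is_derive f x y); [|lra]. intros t Ht. apply Hd; lra.
  - now subst.
  - symmetry. apply (eq_is_derive f y x); [|lra]. intros t Ht. apply Hd; lra.
Qed.

Lemma zero_deriv (f : R -> R) (a c x l : R) :
  (forall w, a < w < c -> f w = 0) -> a < x < c -> is_derive f x l -> l = 0.
Proof.
  intros Hz Hx Hd.
  assert (H0 : is_derive f x 0).
  { apply is_derive_ext_loc with (f := fun _ => 0).
    - apply filter_imp with (2 := loc_int a c x Hx). intros t Ht. now rewrite Hz.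
    - auto_derive; auto. }
  apply is_derive_unique in Hd. apply is_derive_unique in H0. congruence.
Qed.

Lemma indep (a c b1 b2 b3 a1 a2 a3 : R) : a < c ->
  b1 <> b2 -> b1 <> b3 -> b2 <> b3 ->
  (forall w, a < w < c -> 1 + b1 * w <> 0 /\ 1 + b2 * w <> 0 /\ 1 + b3 * w <> 0) ->
  (forall w, a < w < c -> a1 / (1 + b1 * w) ^ 3 + a2 / (1 + b2 * w) ^ 3 + a3 / (1 + b3 * w) ^ 3 = 0) ->
  a1 = 0 /\ a2 = 0 /\ a3 = 0.
Proof.
  intros Hac H12 H13 H23 Hnz Hrel.
  set (w0 := (a + c) / 2).
  assert (Hw0 : a < w0 < c) by (unfold w0; lra).
  set (F1 := fun w => a1 * (-3 * b1) / (1 + b1 * w) ^ 4 + a2 * (-3 * b2) / (1 + b2 * w) ^ 4 + a3 * (-3 * b3) / (1 + b3 * w) ^ 4).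
  assert (E1 : forall w, a < w < c -> F1 w = 0).
  { intros w Hw. destruct (Hnz w Hw) as (n1 & n2 & n3).
    apply (zero_deriv (fun w => a1 / (1 + b1 * w) ^ 3 + a2 / (1 + b2 * w) ^ 3 + a3 / (1 + b3 * w) ^ 3) a c w); auto.
    unfold F1. auto_derive; repeat split; nzt. }
  assert (E2 : a1 * (12 * b1 ^ 2) / (1 + b1 * w0) ^ 5 + a2 * (12 * b2 ^ 2) / (1 + b2 * w0) ^ 5 + a3 * (12 * b3 ^ 2) / (1 + b3 * w0) ^ 5 = 0).
  { destruct (Hnz w0 Hw0) as (n1 & n2 & n3).
    apply (zero_deriv F1 a c w0); auto.
    unfold F1. auto_derive; repeat split; nzt. }
  pose proof (Hrel w0 Hw0) as E0. pose proof (E1 w0 Hw0) as E1'. unfold F1 in E1'.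
  destruct (Hnz w0 Hw0) as (n1 & n2 & n3).
  set (d1 := 1 + b1 * w0) in *. set (d2 := 1 + b2 * w0) in *. set (d3 := 1 + b3 * w0) in *.
  set (y1 := a1 / d1 ^ 3). set (y2 := a2 / d2 ^ 3). set (y3 := a3 / d3 ^ 3).
  set (x1 := b1 / d1). set (x2 := b2 / d2). set (x3 := b3 / d3).
  assert (F0 : y1 + y2 + y3 = 0) by (unfold y1, y2, y3; lra).
  assert (F1' : y1 * x1 + y2 * x2 + y3 * x3 = 0).
  { unfold y1, y2, y3, x1, x2, x3.
    replace (a1 / d1 ^ 3 * (b1 / d1) + a2 / d2 ^ 3 * (b2 / d2) + a3 / d3 ^ 3 * (b3 / d3))
      with ((-1/3) * (a1 * (-3 * b1) / d1 ^ 4 + a2 * (-3 * b2) / d2 ^ 4 + a3 * (-3 * b3) / d3 ^ 4)) by (field; auto).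
    rewrite E1'. ring. }
  assert (F2 : y1 * x1 ^ 2 + y2 * x2 ^ 2 + y3 * x3 ^ 2 = 0).
  { unfold y1, y2, y3, x1, x2, x3.
    replace (a1 / d1 ^ 3 * (b1 / d1) ^ 2 + a2 / d2 ^ 3 * (b2 / d2) ^ 2 + a3 / d3 ^ 3 * (b3 / d3) ^ 2)
      with ((1/12) * (a1 * (12 * b1 ^ 2) / d1 ^ 5 + a2 * (12 * b2 ^ 2) / d2 ^ 5 + a3 * (12 * b3 ^ 2) / d3 ^ 5)) by (field; auto).
    rewrite E2. ring. }
  assert (Dx : forall bi bj di dj, di = 1 + bi * w0 -> dj = 1 + bj * w0 -> di <> 0 -> dj <> 0 -> bi <> bj -> bi / di - bj / dj <> 0).
  { intros bi bj di dj -> -> Hi Hj Hij Hc. apply Hij.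
    assert (Hc' : (bi / (1 + bi * w0) - bj / (1 + bj * w0)) * ((1 + bi * w0) * (1 + bj * w0)) = 0) by (rewrite Hc; ring).
    replace ((bi / (1 + bi * w0) - bj / (1 + bj * w0)) * ((1 + bi * w0) * (1 + bj * w0))) with (bi - bj) in Hc' by (field; auto).
    lra. }
  assert (X12 : x1 - x2 <> 0) by (apply Dx; auto).
  assert (X13 : x1 - x3 <> 0) by (apply Dx; auto).
  assert (X23 : x2 - x3 <> 0) by (apply Dx; auto).
  assert (Y1 : y1 * ((x1 - x2) * (x1 - x3)) = 0).
  { replace (y1 * ((x1 - x2) * (x1 - x3))) with ((y1 * x1 ^ 2 + y2 * x2 ^ 2 + y3 * x3 ^ 2) - (x2 + x3) * (y1 * x1 + y2 * x2 + y3 * x3) + x2 * x3 * (y1 + y2 + y3)) by ring.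
    rewrite F0, F1', F2. ring. }
  assert (Y2 : y2 * ((x2 - x1) * (x2 - x3)) = 0).
  { replace (y2 * ((x2 - x1) * (x2 - x3))) with ((y1 * x1 ^ 2 + y2 * x2 ^ 2 + y3 * x3 ^ 2) - (x1 + x3) * (y1 * x1 + y2 * x2 + y3 * x3) + x1 * x3 * (y1 + y2 + y3)) by ring.
    rewrite F0, F1', F2. ring. }
  assert (Y3 : y3 * ((x3 - x1) * (x3 - x2)) = 0).
  { replace (y3 * ((x3 - x1) * (x3 - x2))) with ((y1 * x1 ^ 2 + y2 * x2 ^ 2 + y3 * x3 ^ 2) - (x1 + x2) * (y1 * x1 + y2 * x2 + y3 * x3) + x1 * x2 * (y1 + y2 + y3)) by ring.
    rewrite F0, F1', F2. ring. }
  assert (Z : forall y u v, y * (u * v) = 0 -> u <> 0 -> v <> 0 -> y = 0).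
  { intros y u v H Hu Hv. destruct (Rmult_integral _ _ H) as [|H']; auto.
    destruct (Rmult_integral _ _ H'); contradiction. }
  assert (y1 = 0) by (apply (Z _ _ _ Y1); auto).
  assert (y2 = 0) by (apply (Z _ _ _ Y2); [intro; apply X12; lra|auto]).
  assert (y3 = 0) by (apply (Z _ _ _ Y3); [intro; apply X13; lra|intro; apply X23; lra]).
  unfold y1, y2, y3 in *.
  assert (P : forall ai di, di <> 0 -> ai / di ^ 3 = 0 -> ai = 0).
  { intros ai di Hd Ha. replace ai with (ai / di ^ 3 * di ^ 3) by (field; auto). rewrite Ha; ring. }
  split; [apply (P a1 d1)|split; [apply (P a2 d2)|apply (P a3 d3)]]; auto.
Qed.

Lemma affine (eps : R) (Rd b N s : R -> R) (R1 R2 w1 w2 : R) :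
  w1 < w2 ->
  (forall w, w1 < w < w2 ->
     ex_derive N w /\ ex_derive s w /\ Derive s w <> 0 /\ 0 < N w) ->
  (forall RR w, R1 < RR < R2 -> w1 < w < w2 ->
     1 + b RR * w <> 0 /\ alpha b RR w <> 0 /\ 0 < Theta eps Rd b N s RR w) ->
  (forall RR w, R1 < RR < R2 -> w1 < w < w2 ->
     is_derive (fun w' => alpha b RR w' * Theta eps Rd b N s RR w') w 0) ->
  forall RR, R1 < RR < R2 ->
  exists C D, C <> 0 /\ forall w, w1 < w < w2 -> N w = (1 + b RR * w) ^ 3 * (C * s w + D).
Proof.
  intros Hw HNs HT HD RR HR.
  set (beta := b RR).
  set (K := - (RR / 3) * Derive (rho eps Rd b) RR * RR ^ 3).
  set (G := fun w => (Derive N w * (1 + beta * w) - 3 * N w * beta) / (Derive s w * (1 + beta * w) ^ 4)).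
  assert (EQ : forall w, w1 < w < w2 -> alpha b RR w * Theta eps Rd b N s RR w = K * G w).
  { intros w Hw'. destruct (HT RR w HR Hw') as (n1 & n2 & n3). destruct (HNs w Hw') as (_ & _ & n4 & _).
    unfold Theta, pressure, K, G. fold beta in n1 |- *. field. repeat split; auto. }
  set (w0 := (w1 + w2) / 2).
  assert (Hw0 : w1 < w0 < w2) by (unfold w0; lra).
  assert (KG0 : K * G w0 <> 0).
  { rewrite <- EQ by auto. destruct (HT RR w0 HR Hw0) as (n1 & n2 & n3).
    apply Rmult_integral_contrapositive_currified; auto; lra. }
  assert (K0 : K <> 0) by (intro; apply KG0; rewrite H; ring).
  assert (G0 : G w0 <> 0) by (intro; apply KG0; rewrite H; ring).
  assert (DG : forall w, w1 < w < w2 -> is_derive G w 0).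
  { intros w Hw'.
    assert (H1 : is_derive (fun w' => K * G w') w 0).
    { apply is_derive_ext_loc with (f := fun w' => alpha b RR w' * Theta eps Rd b N s RR w').
      - apply filter_imp with (2 := loc_int w1 w2 w Hw'). intros t Ht. now apply EQ.
      - now apply HD. }
    apply is_derive_scal with (k := / K) in H1.
    replace (/ K * 0) with 0 in H1 by ring.
    apply is_derive_ext with (2 := H1). intros t. simpl. field. auto. }
  set (C := G w0).
  assert (GC : forall w, w1 < w < w2 -> G w = C).
  { intros w Hw'. apply (const_on G w1 w2); auto. }
  set (T := fun w => N w / (1 + beta * w) ^ 3 - C * s w).
  assert (DT : forall w, w1 < w < w2 -> is_derive T w 0).
  { intros w Hw'. destruct (HT RR w HR Hw') as (n1 & _ & _). destruct (HNs w Hw') as (e1 & e2 & n4 & _).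
    fold beta in n1. pose proof (GC w Hw') as Gw. unfold G in Gw.
    unfold T. auto_derive; repeat split; auto; try (repeat apply Rmult_integral_contrapositive_currified; auto; lra).
    change (Derive (fun x => N x) w) with (Derive N w). change (Derive (fun x => s x) w) with (Derive s w).
    rewrite <- Gw. field. repeat split; auto. }
  exists C, (T w0). split; [exact G0|].
  intros w Hw'. pose proof (const_on T w1 w2 DT w w0 Hw' Hw0) as Tw.
  destruct (HT RR w HR Hw') as (n1 & _ & _). fold beta in n1 |- *.
  rewrite <- Tw. unfold T. field. auto.
Qed.

Lemma mid (b : R -> R) (x y : R) : x < y ->
  (forall t, x <= t <= y -> ex_derive b t) -> b x <> b y ->
  exists z, x <= z <= y /\ b z = (b x + b y) / 2.
Proof.
  intros Hxy Hd Hne.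
  set (m := (b x + b y) / 2).
  assert (Cb : forall t, x <= t <= y -> continuity_pt b t).
  { intros t Ht. apply derivable_continuous_pt, ex_derive_Reals_0, Hd, Ht. }
  assert (Cm : forall t, continuity_pt (fun _ : R => m) t).
  { intros t. apply continuity_pt_const. intros ? ?; reflexivity. }
  assert (Cf : forall f, (forall t, continuity_pt f t) -> forall t, x <= t <= y -> continuity_pt (b - f)%F t /\ continuity_pt (f - b)%F t).
  { intros f Hf t Ht. split; apply continuity_pt_minus; auto. }
  destruct (Rlt_or_le (b x) (b y)) as [Hl|Hl].
  - destruct (Ranalysis5.IVT_interv (b - fct_cte m)%F x y) as [z [Hz Hbz]].
    { intros t Ht. apply (Cf _ Cm t Ht). }
    { exact Hxy. }
    { unfold minus_fct, fct_cte, m. lra. }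
    { unfold minus_fct, fct_cte, m. lra. }
    exists z. split; auto. unfold minus_fct, fct_cte in Hbz. fold m. lra.
  - assert (Hl' : b y < b x) by lra.
    destruct (Ranalysis5.IVT_interv (fct_cte m - b)%F x y) as [z [Hz Hbz]].
    { intros t Ht. apply (Cf _ Cm t Ht). }
    { exact Hxy. }
    { unfold minus_fct, fct_cte, m. lra. }
    { unfold minus_fct, fct_cte, m. lra. }
    exists z. split; auto. unfold minus_fct, fct_cte in Hbz. fold m. lra.
Qed.

Theorem mainTheorem11 (eps : R) (Rd b N s : R -> R) (R1 R2 w1 w2 : R) :
  (eps = 0 \/ eps = 1 \/ eps = -1) ->
  0 < R1 -> R1 < R2 -> w1 < w2 ->
  (forall RR, R1 < RR < R2 -> ex_derive b RR /\ ex_derive Rd RR) ->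
  (forall w, w1 < w < w2 ->
     ex_derive N w /\ ex_derive s w /\ Derive s w <> 0 /\ 0 < N w) ->
  (forall RR w, R1 < RR < R2 -> w1 < w < w2 ->
     1 + b RR * w <> 0 /\ alpha b RR w <> 0 /\ 0 < Theta eps Rd b N s RR w) ->
  (* a = - perp d ln Theta, i.e. d/dw (alpha * Theta) = 0 *)
  (forall RR w, R1 < RR < R2 -> w1 < w < w2 ->
     is_derive (fun w' => alpha b RR w' * Theta eps Rd b N s RR w') w 0) ->
  forall RR RR', R1 < RR < R2 -> R1 < RR' < R2 -> b RR = b RR'.
Proof.
  intros _ _ _ Hw Hb HNs HT HD RR RR' HR HR'.
  destruct (Req_dec (b RR) (b RR')) as [|Hne]; auto. exfalso.
  assert (Hz : exists z, R1 < z < R2 /\ b z = (b RR + b RR') / 2).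
  { destruct (Rtotal_order RR RR') as [Hl|[He|Hg]].
    - destruct (mid b RR RR') as [z [Hz1 Hz2]]; auto.
      + intros t Ht. apply Hb. lra.
      + exists z. split; auto. lra.
    - subst. contradiction.
    - destruct (mid b RR' RR) as [z [Hz1 Hz2]]; auto.
      + intros t Ht. apply Hb. lra.
      + exists z. split; [lra|]. rewrite Hz2. field. }
  destruct Hz as [z [HRz Hbz]].
  destruct (affine eps Rd b N s R1 R2 w1 w2 Hw HNs HT HD RR HR) as (C1 & D1 & C1n & E1).
  destruct (affine eps Rd b N s R1 R2 w1 w2 Hw HNs HT HD RR' HR') as (C2 & D2 & C2n & E2).
  destruct (affine eps Rd b N s R1 R2 w1 w2 Hw HNs HT HD z HRz) as (C3 & D3 & C3n & E3).
  set (b1 := b RR) in *. set (b2 := b RR') in *. set (b3 := b z) in *.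
  assert (n12 : b1 <> b2) by auto.
  assert (n13 : b1 <> b3) by (rewrite Hbz; intro; apply Hne; lra).
  assert (n23 : b2 <> b3) by (rewrite Hbz; intro; apply Hne; lra).
  assert (Hnz : forall w, w1 < w < w2 -> 1 + b1 * w <> 0 /\ 1 + b2 * w <> 0 /\ 1 + b3 * w <> 0).
  { intros w Hw'. split; [|split]; [apply (HT RR w)|apply (HT RR' w)|apply (HT z w)]; auto. }
  assert (V : forall w, w1 < w < w2 ->
    N w / (C1 * (1 + b1 * w) ^ 3) = s w + D1 / C1 /\
    N w / (C2 * (1 + b2 * w) ^ 3) = s w + D2 / C2 /\
    N w / (C3 * (1 + b3 * w) ^ 3) = s w + D3 / C3).
  { intros w Hw'. destruct (Hnz w Hw') as (n1 & n2 & n3).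
    split; [|split]; [rewrite (E1 w Hw')|rewrite (E2 w Hw')|rewrite (E3 w Hw')]; field; auto. }
  set (e12 := D1 / C1 - D2 / C2). set (e13 := D1 / C1 - D3 / C3).
  destruct (indep w1 w2 b1 b2 b3 ((e13 - e12) / C1) (- e13 / C2) (e12 / C3) Hw n12 n13 n23 Hnz) as (_ & a2 & a3).
  { intros w Hw'. destruct (Hnz w Hw') as (n1 & n2 & n3). destruct (V w Hw') as (v1 & v2 & v3).
    destruct (HNs w Hw') as (_ & _ & _ & Np).
    set (L := (e13 - e12) / C1 / (1 + b1 * w) ^ 3 + - e13 / C2 / (1 + b2 * w) ^ 3 + e12 / C3 / (1 + b3 * w) ^ 3).
    assert (NL : N w * L = (e13 - e12) * (N w / (C1 * (1 + b1 * w) ^ 3)) - e13 * (N w / (C2 * (1 + b2 * w) ^ 3)) + e12 * (N w / (C3 * (1 + b3 * w) ^ 3))).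
    { unfold L. field. repeat split; auto. }
    rewrite v1, v2, v3 in NL. unfold e12, e13 in NL.
    assert (NL' : N w * L = 0) by (rewrite NL; field; repeat split; auto).
    destruct (Rmult_integral _ _ NL'); [lra|auto]. }
  assert (e13z : e13 = 0).
  { replace e13 with (- (- e13 / C2) * C2) by (field; auto). rewrite a2. ring. }
  assert (e12z : e12 = 0).
  { replace e12 with ((e12 / C3) * C3) by (field; auto). rewrite a3. ring. }
  destruct (indep w1 w2 b1 b2 b3 (1 / C1) (- 1 / C2) 0 Hw n12 n13 n23 Hnz) as (a1 & _ & _).
  { intros w Hw'. destruct (Hnz w Hw') as (n1 & n2 & n3). destruct (V w Hw') as (v1 & v2 & v3).
    destruct (HNs w Hw') as (_ & _ & _ & Np).
    set (L := 1 / C1 / (1 + b1 * w) ^ 3 + - 1 / C2 / (1 + b2 * w) ^ 3 + 0 / (1 + b3 * w) ^ 3).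
    assert (NL : N w * L = (N w / (C1 * (1 + b1 * w) ^ 3)) - (N w / (C2 * (1 + b2 * w) ^ 3))).
    { unfold L. field. repeat split; auto. }
    rewrite v1, v2 in NL.
    assert (NL' : N w * L = 0).
    { rewrite NL. replace (s w + D1 / C1 - (s w + D2 / C2)) with e12 by (unfold e12; ring). exact e12z. }
    destruct (Rmult_integral _ _ NL'); [lra|auto]. }
  apply C1n. replace C1 with (1 / (1 / C1)) by (field; auto). rewrite a1.
  assert (1 / C1 <> 0) by (apply Rmult_integral_contrapositive_currified; [lra|apply Rinv_neq_0_compat; auto]).
  contradiction.
Qed.
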